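(* Let $0\le\underline{\sigma}\le\overline{\sigma}<\infty$ and $G(a)=\frac12(\overline{\sigma}^2a^+-\underline{\sigma}^2a^-)$. Let $H\in C^2(\mathbb{R})$ have polynomial growth and satisfy, for some $\rho>0$, \[\frac{x}{2}H'(x)-G(H''(x))=\rho H(x),\qquad x\in\mathbb{R}.\] Then $\mathbb{E}[H(B_1)]=0$, where $B$ is a one-dimensional $G$-Brownian motion under the $G$-expectation $\mathbb{E}$ (equivalently, $\mathcal{N}_G[H]=0$ for the $G$-normal distribution $\mathcal{N}_G$).
   Context: For a continuous function $\psi$ of polynomial growth, $\mathbb{E}[\psi(B_1)]=\mathcal{N}_G[\psi]:=u^\psi(1,0)$, where $u^\psi$ is the (polynomial growth) viscosity solution of the $G$-heat equation $\partial_tu-G(\partial_x^2u)=0$ on $(0,\infty)\times\mathbb{R}$ with $u(0,\cdot)=\psi$. The $G$-Brownian motion is the canonical process on $C_0([0,\infty);\mathbb{R})$ under Peng's $G$-expectation, whose time-1 marginal is the $G$-normal distribution. *)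

(* Defs.v *)
From Stdlib Require Import Reals Lra.
From Coquelicot Require Import Coquelicot.
Open Scope R_scope.

Definition Gfun (sl su : R) (a : R) : R :=
  / 2 * (su ^ 2 * Rmax a 0 - sl ^ 2 * Rmax (- a) 0).

Definition poly_growth (f : R -> R) : Prop :=
  exists C : R, exists k : nat, forall x : R, Rabs (f x) <= C * (1 + Rabs x ^ k).

Definition poly_growth2 (u : R -> R -> R) : Prop :=
  forall T : R, exists C : R, exists k : nat,
    forall t x : R, 0 <= t <= T -> Rabs (u t x) <= C * (1 + Rabs x ^ k).

Definition cont_on_half (u : R -> R -> R) : Prop :=
  forall t x : R, 0 <= t ->
    filterlim (fun p : R * R => u (fst p) (snd p))
      (within (fun p : R * R => 0 <= fst p) (locally (t, x)))
      (locally (u t x)).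

Definition C12 (phi phit phix phixx : R -> R -> R) : Prop :=
  (forall t x, is_derive (fun s => phi s x) t (phit t x)) /\
  (forall t x, is_derive (fun y => phi t y) x (phix t x)) /\
  (forall t x, is_derive (fun y => phix t y) x (phixx t x)) /\
  (forall p : R * R, continuous (fun q : R * R => phi (fst q) (snd q)) p) /\
  (forall p : R * R, continuous (fun q : R * R => phit (fst q) (snd q)) p) /\
  (forall p : R * R, continuous (fun q : R * R => phix (fst q) (snd q)) p) /\
  (forall p : R * R, continuous (fun q : R * R => phixx (fst q) (snd q)) p).

Definition visc_sub (G : R -> R) (u : R -> R -> R) : Prop :=
  forall (t x : R) (phi phit phix phixx : R -> R -> R),
    0 < t -> C12 phi phit phix phixx -> phi t x = u t x ->
    (exists d : R, 0 < d /\ forall s y, 0 < s -> Rabs (s - t) < d ->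
        Rabs (y - x) < d -> u s y <= phi s y) ->
    phit t x - G (phixx t x) <= 0.

Definition visc_super (G : R -> R) (u : R -> R -> R) : Prop :=
  forall (t x : R) (phi phit phix phixx : R -> R -> R),
    0 < t -> C12 phi phit phix phixx -> phi t x = u t x ->
    (exists d : R, 0 < d /\ forall s y, 0 < s -> Rabs (s - t) < d ->
        Rabs (y - x) < d -> phi s y <= u s y) ->
    0 <= phit t x - G (phixx t x).

Definition G_heat_solution (G : R -> R) (psi : R -> R) (u : R -> R -> R) : Prop :=
  cont_on_half u /\ poly_growth2 u /\ (forall x, u 0 x = psi x) /\
  visc_sub G u /\ visc_super G u.

(* N_G[psi] = v : the value u^psi(1,0) of the (unique) polynomial-growth
   viscosity solution equals v *)
Definition NG_value (G : R -> R) (psi : R -> R) (v : R) : Prop :=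
  forall u, G_heat_solution G psi u -> u 1 0 = v.

(* Main.v *)
Require Import Defs.
From Stdlib Require Import Reals Lra Lia ZArith Rtopology IndefiniteDescription Classical.
From Coquelicot Require Import Coquelicot.
Open Scope R_scope.

Lemma BW1 (un : nat -> R) a b : (forall n, a <= un n <= b) ->
  exists l, a <= l <= b /\ forall eps, 0 < eps -> forall N, exists p, (N <= p)%nat /\ Rabs (un p - l) < eps.
Proof.
  intros Hb.
  destruct (Bolzano_Weierstrass un (fun c => a <= c <= b) (compact_P3 a b) Hb) as [l Hl].
  assert (Hc : forall eps, 0 < eps -> forall N, exists p, (N <= p)%nat /\ Rabs (un p - l) < eps).
  { intros eps He N. destruct (Hl (disc l (mkposreal eps He)) N) as [p [Hp1 Hp2]].
    - exists (mkposreal eps He). intros y Hy; exact Hy.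
    - exists p; split; auto. }
  exists l; split; [|exact Hc]. split.
  - destruct (Rle_dec a l) as [h|h]; auto. exfalso.
    destruct (Hc (a - l) ltac:(lra) 0%nat) as [p [_ Hp]]. specialize (Hb p).
    apply Rabs_def2 in Hp. lra.
  - destruct (Rle_dec l b) as [h|h]; auto. exfalso.
    destruct (Hc (l - b) ltac:(lra) 0%nat) as [p [_ Hp]]. specialize (Hb p).
    apply Rabs_def2 in Hp. lra.
Qed.

Lemma BW2 (p1 p2 : nat -> R) a b c d :
  (forall n, a <= p1 n <= b) -> (forall n, c <= p2 n <= d) ->
  exists t x, a <= t <= b /\ c <= x <= d /\
   forall del, 0 < del -> forall N, exists n, (N <= n)%nat /\ Rabs (p1 n - t) < del /\ Rabs (p2 n - x) < del.
Proof.
  intros H1 H2.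
  destruct (BW1 p1 a b H1) as [t [Ht Hc]].
  assert (Hj : forall j : nat, exists n, (j <= n)%nat /\ Rabs (p1 n - t) < / (INR j + 1)).
  { intro j. apply Hc. apply Rinv_0_lt_compat. pose proof (pos_INR j); lra. }
  set (nj := fun j => proj1_sig (constructive_indefinite_description _ (Hj j))).
  assert (Hnj : forall j, (j <= nj j)%nat /\ Rabs (p1 (nj j) - t) < / (INR j + 1)).
  { intro j. unfold nj. destruct (constructive_indefinite_description _ (Hj j)); auto. }
  destruct (BW1 (fun j => p2 (nj j)) c d (fun j => H2 (nj j))) as [x [Hx Hcx]].
  exists t, x; split; [exact Ht|split; [exact Hx|]].
  intros del Hdel N.
  destruct (archimed (/ del)) as [Ha _].
  set (M := Z.to_nat (up (/ del))).
  assert (HM : / del < INR M).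
  { unfold M. rewrite INR_IZR_INZ. rewrite Z2Nat.id. lra.
    apply le_IZR. pose proof (Rinv_0_lt_compat _ Hdel). lra. }
  destruct (Hcx del Hdel (N + M)%nat) as [j [Hj1 Hj2]].
  exists (nj j). destruct (Hnj j) as [Hn1 Hn2]. split; [lia|split; [|exact Hj2]].
  eapply Rlt_le_trans; [exact Hn2|].
  assert (INR M <= INR j) by (apply le_INR; lia).
  rewrite <- (Rinv_inv del). apply Rinv_le_contravar.
  apply Rinv_0_lt_compat; exact Hdel. lra.
Qed.


Lemma choose_seq (P : nat -> R -> R -> Prop) : (forall n, exists t x, P n t x) ->
  exists p1 p2 : nat -> R, forall n, P n (p1 n) (p2 n).
Proof.
  intros H.
  assert (H' : forall n, exists q : R * R, P n (fst q) (snd q)).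
  { intro n. destruct (H n) as [t [x Hp]]. exists (t, x); exact Hp. }
  exists (fun n => fst (proj1_sig (constructive_indefinite_description _ (H' n)))).
  exists (fun n => snd (proj1_sig (constructive_indefinite_description _ (H' n)))).
  intro n. destruct (constructive_indefinite_description _ (H' n)); auto.
Qed.

Lemma nat_big (r : R) : exists N : nat, r < INR N.
Proof.
  destruct (Rle_dec r 0) as [h|h]. exists 1%nat; simpl; lra.
  destruct (archimed r) as [Ha _].
  exists (Z.to_nat (up r)). rewrite INR_IZR_INZ, Z2Nat.id. lra.
  apply le_IZR. lra.
Qed.

Lemma max2 (f : R -> R -> R) a b c d : a <= b -> c <= d ->
 (forall t x, a <= t <= b -> c <= x <= d -> forall eps, 0 < eps -> exists del, 0 < del /\
    forall s y, a <= s <= b -> c <= y <= d -> Rabs (s - t) < del -> Rabs (y - x) < del ->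
    f s y < f t x + eps) ->
 exists t0 x0, a <= t0 <= b /\ c <= x0 <= d /\
    forall t x, a <= t <= b -> c <= x <= d -> f t x <= f t0 x0.
Proof.
  intros hab hcd Hc.
  assert (Hbd : exists M, forall t x, a <= t <= b -> c <= x <= d -> f t x <= M).
  { apply NNPP; intro Hn.
    assert (Hs : forall n : nat, exists t x, (a <= t <= b /\ c <= x <= d) /\ INR n < f t x).
    { intro n. apply NNPP; intro Hn2. apply Hn. exists (INR n). intros t x Ht Hx.
      apply Rnot_lt_le. intro Hlt. apply Hn2. exists t, x; auto. }
    destruct (choose_seq _ Hs) as [p1 [p2 Hp]].
    destruct (BW2 p1 p2 a b c d (fun n => proj1 (proj1 (Hp n))) (fun n => proj2 (proj1 (Hp n))))
      as [t [x [Ht [Hx Hcl]]]].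
    destruct (Hc t x Ht Hx 1 Rlt_0_1) as [del [Hdel Hd]].
    destruct (nat_big (f t x + 1)) as [N HN].
    destruct (Hcl del Hdel N) as [n [Hn1 [Hn2 Hn3]]].
    destruct (Hp n) as [[Hr1 Hr2] Hf].
    specialize (Hd _ _ Hr1 Hr2 Hn2 Hn3).
    assert (INR N <= INR n) by (apply le_INR; lia). lra. }
  destruct Hbd as [M HM].
  set (E := fun v => exists t x, (a <= t <= b /\ c <= x <= d) /\ v = f t x).
  assert (HE1 : bound E). { exists M. intros v [t [x [[Ht Hx] ->]]]. apply HM; auto. }
  assert (HE2 : exists v, E v). { exists (f a c). exists a, c. split; [split; lra|reflexivity]. }
  destruct (completeness E HE1 HE2) as [m [Hm1 Hm2]].
  assert (Hs : forall n : nat, exists t x, (a <= t <= b /\ c <= x <= d) /\ m - / (INR n + 1) < f t x).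
  { intro n. apply NNPP; intro Hn2.
    assert (Hpos : 0 < / (INR n + 1)) by (apply Rinv_0_lt_compat; pose proof (pos_INR n); lra).
    assert (m <= m - / (INR n + 1)); [|lra].
    apply Hm2. intros v [t [x [Hr ->]]]. apply Rnot_lt_le. intro Hlt. apply Hn2. exists t, x; auto. }
  destruct (choose_seq _ Hs) as [p1 [p2 Hp]].
  destruct (BW2 p1 p2 a b c d (fun n => proj1 (proj1 (Hp n))) (fun n => proj2 (proj1 (Hp n))))
    as [t [x [Ht [Hx Hcl]]]].
  exists t, x; split; [exact Ht|split; [exact Hx|]].
  assert (Hmt : m <= f t x).
  { apply Rnot_lt_le; intro Hlt.
    set (eps := (m - f t x) / 2).
    assert (He : 0 < eps) by (unfold eps; lra).
    destruct (Hc t x Ht Hx eps He) as [del [Hdel Hd]].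
    destruct (nat_big (/ eps)) as [N HN].
    destruct (Hcl del Hdel N) as [n [Hn1 [Hn2 Hn3]]].
    destruct (Hp n) as [[Hr1 Hr2] Hf].
    specialize (Hd _ _ Hr1 Hr2 Hn2 Hn3).
    assert (INR N <= INR n) by (apply le_INR; lia).
    assert (/ (INR n + 1) < eps).
    { rewrite <- (Rinv_inv eps). apply Rinv_lt_contravar.
      apply Rmult_lt_0_compat. apply Rinv_0_lt_compat; lra. pose proof (pos_INR n); lra. lra. }
    unfold eps in *; lra. }
  intros t' x' Ht' Hx'. apply Rle_trans with m; auto.
  apply Hm1. exists t', x'; auto.
Qed.


Lemma G_hom sl su c a : 0 <= c -> Gfun sl su (c * a) = c * Gfun sl su a.
Proof.
  intros hc. unfold Gfun.
  destruct (Req_dec c 0) as [->|hc'].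
  { rewrite Rmult_0_l, Ropp_0, Rmax_left by lra. lra. }
  destruct (Rle_dec 0 a).
  - rewrite (Rmax_left (c*a)) by nra. rewrite (Rmax_left a) by lra.
    rewrite (Rmax_right (- (c*a))) by nra. rewrite (Rmax_right (- a)) by lra. ring.
  - rewrite (Rmax_right (c*a)) by nra. rewrite (Rmax_right a) by lra.
    rewrite (Rmax_left (- (c*a))) by nra. rewrite (Rmax_left (- a)) by lra. ring.
Qed.

Lemma G_lip sl su a b : 0 <= b -> Gfun sl su (a + b) <= Gfun sl su a + (sl^2 + su^2)/2 * b.
Proof.
  intros hb. unfold Gfun.
  assert (0 <= sl^2) by (simpl; nra). assert (0 <= su^2) by (simpl; nra).
  unfold Rmax; repeat destruct Rle_dec; nra.
Qed.

Lemma G_neg sl su a : - Gfun sl su (- a) = Gfun su sl a.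
Proof.
  unfold Gfun. rewrite Ropp_involutive. ring.
Qed.

Definition cont2 (f : R -> R -> R) (p : R * R) := continuous (fun q : R * R => f (fst q) (snd q)) p.

Lemma cont2_plus f g p : cont2 f p -> cont2 g p -> cont2 (fun t x => f t x + g t x) p.
Proof. intros. exact (continuous_plus _ _ p H H0). Qed.

Lemma cont2_mult f g p : cont2 f p -> cont2 g p -> cont2 (fun t x => f t x * g t x) p.
Proof. intros. exact (continuous_mult _ _ p H H0). Qed.

Lemma cont2_opp f p : cont2 f p -> cont2 (fun t x => - f t x) p.
Proof. intros. exact (continuous_opp _ p H). Qed.

Lemma cont2_const c p : cont2 (fun _ _ => c) p.
Proof. apply continuous_const. Qed.

Lemma cont2_fst p : cont2 (fun t _ => t) p.
Proof. destruct p; apply continuous_fst. Qed.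

Lemma cont2_snd p : cont2 (fun _ x => x) p.
Proof. destruct p; apply continuous_snd. Qed.

Lemma cont2_comp (g : R -> R) f p : cont2 f p -> continuous g (f (fst p) (snd p)) ->
  cont2 (fun t x => g (f t x)) p.
Proof. intros. exact (continuous_comp _ g p H H0). Qed.

Lemma cont2_ext f g p : (forall t x, f t x = g t x) -> cont2 f p -> cont2 g p.
Proof. intros He Hc. eapply continuous_ext; [|exact Hc]. intros; apply He. Qed.

Lemma ball_R (x y e : R) : ball x e y <-> Rabs (y - x) < e.
Proof. reflexivity. Qed.

Lemma ball_R' (x y e : R) : ball x e y -> x - e < y < x + e.
Proof. intro h. change (Rabs (y - x) < e) in h. apply Rabs_def2 in h. lra. Qed.

Lemma cont2_eps f t x : cont2 f (t, x) -> forall eps, 0 < eps -> exists del, 0 < del /\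
  forall s y, Rabs (s - t) < del -> Rabs (y - x) < del -> Rabs (f s y - f t x) < eps.
Proof.
  intros Hc eps He.
  specialize (Hc (ball (f t x) (mkposreal eps He)) (locally_ball _ _)).
  destruct Hc as [d Hd].
  exists d; split; [apply cond_pos|]. intros s y Hs Hy.
  apply (Hd (s, y)). split; [exact Hs|exact Hy].
Qed.

Lemma half_eps u t x : cont_on_half u -> 0 <= t -> forall eps, 0 < eps -> exists del, 0 < del /\
  forall s y, 0 <= s -> Rabs (s - t) < del -> Rabs (y - x) < del -> Rabs (u s y - u t x) < eps.
Proof.
  intros Hc ht eps He.
  specialize (Hc t x ht (ball (u t x) (mkposreal eps He)) (locally_ball _ _)).
  destruct Hc as [d Hd].
  exists d; split; [apply cond_pos|]. intros s y hs Hs Hy.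
  apply (Hd (s, y)). split; [exact Hs|exact Hy]. exact hs.
Qed.

Lemma C12_lin (f ft fx fxx g gt gx gxx : R -> R -> R) (a b c : R) :
  C12 f ft fx fxx -> C12 g gt gx gxx ->
  C12 (fun t x => a * f t x + b * g t x + c) (fun t x => a * ft t x + b * gt t x)
      (fun t x => a * fx t x + b * gx t x) (fun t x => a * fxx t x + b * gxx t x).
Proof.
  intros [F1 [F2 [F3 [F4 [F5 [F6 F7]]]]]] [G1 [G2 [G3 [G4 [G5 [G6 G7]]]]]].
  assert (L : forall (h1 h2 : R -> R) y d1 d2, is_derive h1 y d1 -> is_derive h2 y d2 ->
     is_derive (fun z => a * h1 z + b * h2 z + c) y (a * d1 + b * d2)).
  { intros h1 h2 y d1 d2 D1 D2. auto_derive.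
    - split; [eexists; exact D1|split; [eexists; exact D2|auto]].
    - assert (E1 : Derive (fun x : R => h1 x) y = d1) by (apply is_derive_unique; exact D1).
      assert (E2 : Derive (fun x : R => h2 x) y = d2) by (apply is_derive_unique; exact D2).
      rewrite E1, E2. ring. }
  assert (L' : forall (h1 h2 : R -> R) y d1 d2, is_derive h1 y d1 -> is_derive h2 y d2 ->
     is_derive (fun z => a * h1 z + b * h2 z) y (a * d1 + b * d2)).
  { intros h1 h2 y d1 d2 D1 D2. auto_derive.
    - split; [eexists; exact D1|split; [eexists; exact D2|auto]].
    - assert (E1 : Derive (fun x : R => h1 x) y = d1) by (apply is_derive_unique; exact D1).
      assert (E2 : Derive (fun x : R => h2 x) y = d2) by (apply is_derive_unique; exact D2).
      rewrite E1, E2. ring. }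
  assert (K : forall (h1 h2 : R -> R -> R) p, cont2 h1 p -> cont2 h2 p ->
     cont2 (fun t x => a * h1 t x + b * h2 t x) p).
  { intros. apply cont2_plus; apply cont2_mult; auto using cont2_const. }
  split; [intros; apply L; auto|].
  split; [intros; apply L; auto|].
  split; [intros; apply L'; auto|].
  split; [intros p; apply (cont2_plus (fun t x => a * f t x + b * g t x) (fun _ _ => c)); [apply K; [apply F4|apply G4]|apply cont2_const]|].
  split; [intros p; apply (K ft gt); [apply F5|apply G5]|].
  split; intros p; [apply (K fx gx); [apply F6|apply G6]|apply (K fxx gxx); [apply F7|apply G7]].
Qed.


Lemma cont_exp z : continuous exp z.
Proof. apply (ex_derive_continuous (K:=R_AbsRing) (V:=R_NormedModule)). auto_derive; auto. Qed.

Lemma cont_pow k z : continuous (fun y => y ^ k) z.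
Proof. apply (ex_derive_continuous (K:=R_AbsRing) (V:=R_NormedModule)). auto_derive; auto. Qed.

Definition psi (lam : R) (n : nat) (t x : R) := exp (lam * t) * (1 + x ^ (S (S n))).

Lemma psi_C12 lam n : C12 (psi lam n)
  (fun t x => lam * psi lam n t x)
  (fun t x => exp (lam * t) * (INR (S (S n)) * x ^ (S n)))
  (fun t x => exp (lam * t) * (INR (S (S n)) * INR (S n) * x ^ n)).
Proof.
  unfold psi.
  assert (Ce : forall p, cont2 (fun t _ => exp (lam * t)) p).
  { intro p. apply (cont2_comp exp (fun t _ => lam * t)).
    apply cont2_mult; [apply cont2_const|apply cont2_fst]. apply cont_exp. }
  assert (Cp : forall k p, cont2 (fun _ x => x ^ k) p).
  { intros k p. apply (cont2_comp (fun y => y ^ k) (fun _ x => x)). apply cont2_snd. apply cont_pow. }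
  split; [intros t x; auto_derive; auto; simpl; ring|].
  split; [intros t x; auto_derive; auto; simpl; ring|].
  split; [intros t x; auto_derive; auto; change (match n with 0%nat => 1 | S _ => INR n + 1 end) with (INR (S n)); rewrite (S_INR (S n)); ring|].
  split; [intro p; apply (cont2_mult (fun t _ => exp (lam*t)) (fun _ x => 1 + x^S(S n))); [apply Ce|apply (cont2_plus (fun _ _ => 1) (fun _ x => x ^ S (S n))); [apply cont2_const|apply Cp]]|].
  split; [intro p; apply (cont2_mult (fun _ _ => lam) (fun t x => exp (lam*t) * (1 + x^S(S n)))); [apply cont2_const|apply (cont2_mult (fun t _ => exp (lam*t)) (fun _ x => 1 + x^S(S n))); [apply Ce|apply (cont2_plus (fun _ _ => 1) (fun _ x => x ^ S (S n))); [apply cont2_const|apply Cp]]]|].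
  split; intro p.
  - apply (cont2_mult (fun t _ => exp (lam*t)) (fun _ x => INR (S (S n)) * x ^ S n)); [apply Ce|].
    apply (cont2_mult (fun _ _ => INR (S (S n))) (fun _ x => x ^ S n)); [apply cont2_const|apply Cp].
  - apply (cont2_mult (fun t _ => exp (lam*t)) (fun _ x => INR (S (S n)) * INR (S n) * x ^ n)); [apply Ce|].
    apply (cont2_mult (fun _ _ => INR (S (S n)) * INR (S n)) (fun _ x => x ^ n)); [apply cont2_const|apply Cp].
Qed.

Lemma pow_even_nonneg j x : 0 <= x ^ (2 * j).
Proof. rewrite pow_mult. apply pow_le. nra. Qed.

Lemma pow_even_le j x : x ^ (2 * j) <= 1 + x ^ (S (S (2 * j))).
Proof.
  replace (S (S (2 * j))) with (2 * (S j))%nat by lia.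
  rewrite !pow_mult. change ((x ^ 2) ^ S j) with (x ^ 2 * (x ^ 2) ^ j).
  assert (0 <= x ^ 2) by nra.
  assert (0 <= (x ^ 2) ^ j) by (apply pow_le; lra).
  assert (0 <= x ^ 2 * (x ^ 2) ^ j) by (apply Rmult_le_pos; lra).
  destruct (Rle_dec (x ^ 2) 1).
  - assert ((x ^ 2) ^ j <= 1 ^ j) by (apply pow_incr; lra). rewrite pow1 in *. lra.
  - assert ((x ^ 2 - 1) * (x ^ 2) ^ j >= 0) by (apply Rle_ge, Rmult_le_pos; lra). nra.
Qed.


Definition Lf (a t : R) := ln (1 - Rmin t a) - Rmax (t - a) 0 / (1 - a).
Definition Ld (a t : R) := - / (1 - Rmin t a).

Lemma Lf_le a t : t <= a -> Lf a t = ln (1 - t).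
Proof. intro h. unfold Lf. rewrite Rmin_left, Rmax_right by lra. unfold Rdiv; rewrite Rmult_0_l. ring. Qed.

Lemma Lf_ge a t : a <= t -> Lf a t = ln (1 - a) - (t - a) / (1 - a).
Proof. intro h. unfold Lf. rewrite Rmin_right, Rmax_left by lra. reflexivity. Qed.

Lemma Lf_deriv a t : a < 1 -> is_derive (Lf a) t (Ld a t).
Proof.
  intro ha. unfold Ld.
  destruct (Rtotal_order t a) as [h|[h|h]].
  - rewrite Rmin_left by lra.
    apply (is_derive_ext_loc (fun s => ln (1 - s))).
    + exists (mkposreal (a - t) ltac:(lra)). intros s Hs. apply ball_R' in Hs. simpl in Hs. rewrite Lf_le by lra. reflexivity.
    + auto_derive. repeat split; lra. field. lra.
  - subst t. rewrite Rmin_left by lra.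
    apply is_derive_Reals. intros eps He.
    assert (D0 : derivable_pt_lim (fun s => ln (1 - s)) a (- / (1 - a))).
    { apply is_derive_Reals. auto_derive. repeat split; lra. field. lra. }
    destruct (D0 eps He) as [del Hdel].
    exists del. intros h hn hh.
    destruct (Rlt_or_le h 0) as [hl|hl].
    + rewrite Lf_le by lra. rewrite Lf_le by lra. apply Hdel; auto.
    + rewrite Lf_ge by lra. rewrite Lf_le by lra.
      replace ((ln (1 - a) - (a + h - a) / (1 - a) - ln (1 - a)) / h - - / (1 - a)) with 0.
      rewrite Rabs_R0; lra. field. split; lra.
  - rewrite Rmin_right by lra.
    apply (is_derive_ext_loc (fun s => ln (1 - a) - (s - a) / (1 - a))).
    + exists (mkposreal (t - a) ltac:(lra)). intros s Hs. apply ball_R' in Hs. simpl in Hs. rewrite Lf_ge by lra. reflexivity.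
    + auto_derive. repeat split; lra. field. lra.
Qed.

Lemma Ld_cont a t : a < 1 -> continuous (Ld a) t.
Proof.
  intro ha. unfold Ld.
  apply (continuous_ext (fun s => - / (1 - (s + a - Rabs (s - a)) / 2))).
  { intro s. unfold Rmin, Rabs. destruct Rle_dec, Rcase_abs; f_equal; f_equal; lra. }
  apply (continuous_opp (fun s => / (1 - (s + a - Rabs (s - a)) / 2))).
  apply (continuous_comp (fun s => (1 - (s + a - Rabs (s - a)) / 2)) Rinv).
  - apply (continuous_plus (fun _ => 1) (fun s => - ((s + a - Rabs (s - a)) / 2))).
    apply continuous_const.
    apply (continuous_opp (fun s => (s + a - Rabs (s - a)) / 2)).
    apply (continuous_mult (fun s => (s + a - Rabs (s - a))) (fun _ => / 2)); [|apply continuous_const].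
    apply (continuous_plus (fun s => s + a) (fun s => - Rabs (s - a))).
    apply (continuous_plus (fun s => s) (fun _ => a)). apply continuous_id. apply continuous_const.
    apply (continuous_opp (fun s => Rabs (s - a))).
    apply continuous_Rabs_comp.
    apply (continuous_plus (fun s => s) (fun _ => - a)). apply continuous_id. apply continuous_const.
  - apply (ex_derive_continuous (K:=R_AbsRing) (V:=R_NormedModule)). auto_derive.
    unfold Rabs; destruct Rcase_abs; lra.
Qed.

Lemma exp_mono x y : x <= y -> exp x <= exp y.
Proof. intro h. destruct (Rle_lt_or_eq_dec _ _ h) as [h1|h1]. apply Rlt_le, exp_increasing; auto. subst; lra. Qed.

Section W.
Variables (rho a : R) (H : R -> R).

Definition Yf (t x : R) := x * exp (- Lf a t / 2).
Definition Wf (t x : R) := exp (rho * Lf a t) * H (Yf t x).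
Definition Wt (t x : R) := Ld a t * (exp (rho * Lf a t) * (rho * H (Yf t x) - Yf t x / 2 * Derive H (Yf t x))).
Definition Wx (t x : R) := exp (rho * Lf a t) * (exp (- Lf a t / 2) * Derive H (Yf t x)).
Definition Wxx (t x : R) := exp (rho * Lf a t) * (exp (- Lf a t / 2) * (exp (- Lf a t / 2) * Derive (Derive H) (Yf t x))).

Hypothesis ha : a < 1.
Hypothesis hd1 : forall x, ex_derive H x.
Hypothesis hd2 : forall x, ex_derive (Derive H) x.
Hypothesis hc2 : forall x, continuous (Derive (Derive H)) x.

Lemma Lf_cont t : continuous (Lf a) t.
Proof. apply (ex_derive_continuous (K:=R_AbsRing) (V:=R_NormedModule)). eexists. apply Lf_deriv; auto. Qed.

Lemma W_C12 : C12 Wf Wt Wx Wxx.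
Proof.
  assert (CL : forall p, cont2 (fun t _ => Lf a t) p).
  { intro p. apply (cont2_comp (Lf a) (fun t _ => t)). apply cont2_fst. apply Lf_cont. }
  assert (CLd : forall p, cont2 (fun t _ => Ld a t) p).
  { intro p. apply (cont2_comp (Ld a) (fun t _ => t)). apply cont2_fst. apply Ld_cont; auto. }
  assert (CE : forall c p, cont2 (fun t _ => exp (c * Lf a t)) p).
  { intros c p. apply (cont2_comp exp (fun t _ => c * Lf a t)).
    apply (cont2_mult (fun _ _ => c) (fun t _ => Lf a t)). apply cont2_const. apply CL. apply cont_exp. }
  assert (CE2 : forall p, cont2 (fun t _ => exp (- Lf a t / 2)) p).
  { intro p. apply (cont2_ext (fun t _ => exp ((- / 2) * Lf a t))). intros; f_equal; field. apply CE. }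
  assert (CY : forall p, cont2 Yf p).
  { intro p. apply (cont2_mult (fun _ x => x) (fun t _ => exp (- Lf a t / 2))). apply cont2_snd. apply CE2. }
  assert (CH : forall p, cont2 (fun t x => H (Yf t x)) p).
  { intro p. apply (cont2_comp H Yf). apply CY. apply (ex_derive_continuous (K:=R_AbsRing) (V:=R_NormedModule)); auto. }
  assert (CH1 : forall p, cont2 (fun t x => Derive H (Yf t x)) p).
  { intro p. apply (cont2_comp (Derive H) Yf). apply CY. apply (ex_derive_continuous (K:=R_AbsRing) (V:=R_NormedModule)); auto. }
  assert (CH2 : forall p, cont2 (fun t x => Derive (Derive H) (Yf t x)) p).
  { intro p. apply (cont2_comp (Derive (Derive H)) Yf). apply CY. auto. }
  split.
  { intros t x. unfold Wf, Wt, Yf.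
    pose proof (Lf_deriv a t ha) as DL.
    auto_derive.
    - repeat split; auto; eexists; exact DL.
    - assert (E1 : Derive (fun x0 : R => Lf a x0) t = Ld a t) by (apply is_derive_unique; exact DL).
      rewrite E1. replace (Derive (fun x : R => H x)) with (Derive H) by reflexivity. unfold Rdiv. ring. }
  split.
  { intros t x. unfold Wf, Wx, Yf. auto_derive. repeat split; auto. try replace (Derive (fun x : R => H x)) with (Derive H) by reflexivity. try replace (Derive (fun x : R => Derive H x)) with (Derive (Derive H)) by reflexivity. unfold Rdiv. ring. }
  split.
  { intros t x. unfold Wx, Wxx, Yf. auto_derive. repeat split; auto. try replace (Derive (fun x : R => H x)) with (Derive H) by reflexivity. try replace (Derive (fun x : R => Derive H x)) with (Derive (Derive H)) by reflexivity. unfold Rdiv. ring. }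
  split.
  { intro p. change (cont2 Wf p). apply (cont2_mult (fun t _ => exp (rho * Lf a t)) (fun t x => H (Yf t x))); auto. }
  split.
  { intro p. change (cont2 Wt p). unfold Wt.
    apply (cont2_mult (fun t _ => Ld a t) (fun t x => exp (rho * Lf a t) * (rho * H (Yf t x) - Yf t x / 2 * Derive H (Yf t x)))); auto.
    apply (cont2_mult (fun t _ => exp (rho * Lf a t)) (fun t x => (rho * H (Yf t x) - Yf t x / 2 * Derive H (Yf t x)))); auto.
    apply (cont2_plus (fun t x => rho * H (Yf t x)) (fun t x => - (Yf t x / 2 * Derive H (Yf t x)))).
    apply (cont2_mult (fun _ _ => rho) (fun t x => H (Yf t x))); auto using cont2_const.
    apply (cont2_opp (fun t x => (Yf t x / 2 * Derive H (Yf t x)))).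
    apply (cont2_mult (fun t x => Yf t x / 2) (fun t x => Derive H (Yf t x))); auto.
    apply (cont2_mult Yf (fun _ _ => / 2)); auto using cont2_const. }
  split.
  { intro p. change (cont2 Wx p). unfold Wx.
    apply (cont2_mult (fun t _ => exp (rho * Lf a t)) (fun t x => exp (- Lf a t / 2) * Derive H (Yf t x))); auto.
    apply (cont2_mult (fun t _ => exp (- Lf a t / 2)) (fun t x => Derive H (Yf t x))); auto. }
  { intro p. change (cont2 Wxx p). unfold Wxx.
    apply (cont2_mult (fun t _ => exp (rho * Lf a t)) (fun t x => exp (- Lf a t / 2) * (exp (- Lf a t / 2) * Derive (Derive H) (Yf t x)))); auto.
    apply (cont2_mult (fun t _ => exp (- Lf a t / 2)) (fun t x => exp (- Lf a t / 2) * Derive (Derive H) (Yf t x))); auto.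
    apply (cont2_mult (fun t _ => exp (- Lf a t / 2)) (fun t x => Derive (Derive H) (Yf t x))); auto. }
Qed.


Lemma W_pde sl su : (forall y, y / 2 * Derive H y - Gfun sl su (Derive_n H 2 y) = rho * H y) ->
  forall t x, t <= a -> Wt t x = Gfun sl su (Wxx t x).
Proof.
  intros hode t x ht.
  assert (h1 : 0 < 1 - t) by lra.
  unfold Wt, Wxx, Ld. rewrite Rmin_left by lra.
  assert (EE : exp (- Lf a t / 2) * exp (- Lf a t / 2) = / (1 - t)).
  { rewrite <- exp_plus. replace (- Lf a t / 2 + - Lf a t / 2) with (- Lf a t) by field.
    rewrite exp_Ropp, Lf_le by lra. rewrite exp_ln by lra. reflexivity. }
  replace (exp (rho * Lf a t) * (exp (- Lf a t / 2) * (exp (- Lf a t / 2) * Derive (Derive H) (Yf t x))))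
    with ((exp (rho * Lf a t) * / (1 - t)) * Derive (Derive H) (Yf t x)) by (rewrite <- EE; ring).
  rewrite G_hom.
  2: { apply Rmult_le_pos. apply Rlt_le, exp_pos. apply Rlt_le, Rinv_0_lt_compat; lra. }
  specialize (hode (Yf t x)). change (Derive_n H 2 (Yf t x)) with (Derive (Derive H) (Yf t x)) in hode.
  replace (rho * H (Yf t x) - Yf t x / 2 * Derive H (Yf t x)) with (- Gfun sl su (Derive (Derive H) (Yf t x))) by lra.
  field. lra.
Qed.

Lemma W_zero x : 0 <= a -> Wf 0 x = H x.
Proof.
  intro h. unfold Wf, Yf. rewrite Lf_le by lra. replace (1 - 0) with 1 by ring.
  rewrite ln_1. replace (rho * 0) with 0 by ring. replace (- 0 / 2) with 0 by field.
  rewrite exp_0, Rmult_1_l, Rmult_1_r. reflexivity.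
Qed.

Lemma W_x0 t : t <= a -> Wf t 0 = exp (rho * ln (1 - t)) * H 0.
Proof. intro h. unfold Wf, Yf. rewrite Lf_le by lra. f_equal. f_equal. ring. Qed.

Lemma W_growth : poly_growth H -> 0 <= a -> 0 < rho ->
  exists C k, forall t x, 0 <= t <= a -> Rabs (Wf t x) <= C * (1 + Rabs x ^ k).
Proof.
  intros [C [k HC]] ha0 hr.
  assert (C0 : 0 <= C).
  { specialize (HC 0). assert (0 <= Rabs 0 ^ k) by (apply pow_le, Rabs_pos).
    pose proof (Rabs_pos (H 0)). nra. }
  set (B := exp (- ln (1 - a) / 2)).
  assert (B1 : 1 <= B).
  { unfold B. apply Rle_trans with (exp 0); [rewrite exp_0; lra|]. apply exp_mono.
    assert (ln (1 - a) <= ln 1) by (apply ln_le; lra). rewrite ln_1 in *. lra. }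
  exists (C * B ^ k), k. intros t x ht.
  assert (Bk : 1 <= B ^ k) by (apply pow_R1_Rle; lra).
  unfold Wf. rewrite Lf_le by lra.
  assert (L0 : ln (1 - a) <= ln (1 - t) <= 0).
  { split. apply ln_le; lra. rewrite <- ln_1. apply ln_le; lra. }
  destruct L0 as [L01 L02].
  assert (E1 : exp (rho * ln (1 - t)) <= 1).
  { apply Rle_trans with (exp 0); [|rewrite exp_0; lra]. apply exp_mono. nra. }
  assert (E2 : exp (- ln (1 - t) / 2) <= B).
  { unfold B. apply exp_mono. lra. }
  assert (YB : Rabs (Yf t x) <= Rabs x * B).
  { unfold Yf. rewrite Lf_le by lra. rewrite Rabs_mult, (Rabs_right (exp _)) by (apply Rle_ge, Rlt_le, exp_pos).
    apply Rmult_le_compat_l; auto using Rabs_pos. }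
  assert (YK : Rabs (Yf t x) ^ k <= Rabs x ^ k * B ^ k).
  { rewrite <- Rpow_mult_distr. apply pow_incr. split; auto using Rabs_pos. }
  unfold Yf in YK. rewrite Lf_le in YK by lra.
  rewrite Rabs_mult, (Rabs_right (exp _)) by (apply Rle_ge, Rlt_le, exp_pos).
  pose proof (HC (x * exp (- ln (1 - t) / 2))) as HC1.
  pose proof (Rabs_pos (H (x * exp (- ln (1 - t) / 2)))).
  pose proof (exp_pos (rho * ln (1 - t))).
  assert (0 <= Rabs x ^ k) by (apply pow_le, Rabs_pos).
  apply Rle_trans with (Rabs (H (x * exp (- ln (1 - t) / 2)))).
  { unfold Yf; rewrite Lf_le by lra. nra. }
  apply Rle_trans with (1 := HC1).
  apply Rle_trans with (C * (1 + Rabs x ^ k * B ^ k)).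
  { apply Rmult_le_compat_l; lra. }
  assert (0 <= C * (B ^ k - 1) * (1 + 0)) by (apply Rmult_le_pos; [apply Rmult_le_pos|]; lra).
  nra.
Qed.
End W.


Lemma abs_pow_le k m x : (k <= m)%nat -> Rabs x ^ k <= 1 + Rabs x ^ m.
Proof.
  intro h. pose proof (Rabs_pos x).
  assert (0 <= Rabs x ^ m) by (apply pow_le; lra).
  destruct (Rle_dec (Rabs x) 1).
  - assert (Rabs x ^ k <= 1 ^ k) by (apply pow_incr; lra). rewrite pow1 in *. lra.
  - assert (Rabs x ^ k <= Rabs x ^ m) by (apply Rle_pow; [lra|exact h]). lra.
Qed.

Lemma pow_p_abs k x : x ^ S (S (2 * k)) = Rabs x ^ S (S (2 * k)).
Proof.
  replace (S (S (2 * k))) with (2 * S k)%nat by lia.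
  rewrite RPow_abs. symmetry. apply Rabs_right. apply Rle_ge, pow_even_nonneg.
Qed.

Lemma big_x C eps k x : 0 <= C -> 0 < eps -> 1 + 4 * C / eps <= Rabs x ->
  C * (1 + Rabs x ^ k) < eps * (1 + x ^ S (S (2 * k))).
Proof.
  intros hC he hx. rewrite pow_p_abs. set (a := Rabs x) in *.
  assert (a1 : 1 <= a). { assert (0 <= 4 * C / eps) by (apply Rmult_le_pos; [lra|apply Rlt_le, Rinv_0_lt_compat; lra]). lra. }
  replace (S (S (2 * k))) with (k + (S (S k)))%nat by lia. rewrite pow_add.
  assert (Ak : 1 <= a ^ k) by (apply pow_R1_Rle; lra).
  assert (Q : a <= a ^ S (S k)).
  { apply Rle_trans with (a ^ 1). simpl; lra. apply Rle_pow; lia || lra. }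
  assert (E4 : eps * (1 + 4 * C / eps) = eps + 4 * C) by (field; lra).
  assert (eps * a <= eps * a ^ S (S k)) by (apply Rmult_le_compat_l; lra).
  assert (eps + 4 * C <= eps * a) by (rewrite <- E4; apply Rmult_le_compat_l; lra).
  assert (0 <= a ^ k * (eps * a ^ S (S k) - eps - 4 * C)) by (apply Rmult_le_pos; lra).
  nra.
Qed.

Lemma comparison sl su (u w wt wx wxx : R -> R -> R) (T' : R) :
  0 < T' -> C12 w wt wx wxx ->
  (forall t x, 0 < t < T' -> wt t x = Gfun sl su (wxx t x)) ->
  cont_on_half u ->
  (exists C k, forall t x, 0 <= t <= T' -> Rabs (u t x - w t x) <= C * (1 + Rabs x ^ k)) ->
  (forall x, u 0 x <= w 0 x) ->
  visc_sub (Gfun sl su) u ->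
  forall t x, 0 <= t < T' -> u t x <= w t x.
Proof.
  intros hT Cw Pw Cu [C [k HC]] H0 Hsub t1 x1 ht1.
  apply Rnot_lt_le. intro Hlt.
  set (eta := u t1 x1 - w t1 x1).
  assert (heta : 0 < eta) by (unfold eta; lra).
  assert (hC : 0 <= C).
  { specialize (HC 0 0 ltac:(lra)). pose proof (Rabs_pos (u 0 0 - w 0 0)).
    assert (0 <= Rabs 0 ^ k) by (apply pow_le, Rabs_pos). nra. }
  set (n := (2 * k)%nat).
  set (K := (sl ^ 2 + su ^ 2) / 2).
  assert (hK : 0 <= K) by (unfold K; simpl; nra).
  set (P2 := INR (S (S n)) * INR (S n)).
  assert (hP2 : 0 <= P2) by (unfold P2; apply Rmult_le_pos; apply pos_INR).
  set (X1 := 1 + x1 ^ S (S n)).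
  assert (hX1 : 1 <= X1) by (unfold X1, n; pose proof (pow_even_nonneg (S k) x1);
     replace (2 * S k)%nat with (S (S (2 * k))) in * by lia; lra).
  set (A := 4 * C * X1 / eta).
  assert (hA : 0 <= A) by (unfold A; apply Rmult_le_pos; [nra|apply Rlt_le, Rinv_0_lt_compat; lra]).
  set (lam := K * P2 + 1 + A / (T' - t1)).
  assert (hlam : K * P2 + 1 <= lam).
  { unfold lam. assert (0 <= A / (T' - t1)) by (apply Rmult_le_pos; [lra|apply Rlt_le, Rinv_0_lt_compat; lra]). lra. }
  set (ps := psi lam n).
  assert (hps : forall t x, 0 < ps t x).
  { intros t x. unfold ps, psi. apply Rmult_lt_0_compat. apply exp_pos.
    pose proof (pow_even_nonneg (S k) x). replace (2 * S k)%nat with (S (S n)) in * by (unfold n; lia). lra. }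
  set (eps := eta / (2 * ps t1 x1)).
  assert (heps : 0 < eps) by (unfold eps; apply Rdiv_lt_0_compat; [lra|specialize (hps t1 x1); lra]).
  set (Phi := fun t x => u t x - w t x - eps * ps t x).
  assert (F1 : Phi t1 x1 = eta / 2).
  { unfold Phi, eps. fold eta. field. specialize (hps t1 x1); lra. }
  assert (F0 : forall x, Phi 0 x < 0).
  { intro x. unfold Phi. specialize (H0 x). specialize (hps 0 x). nra. }
  assert (Gr : forall t x, 0 <= t <= T' -> u t x - w t x <= 2 * C * (1 + x ^ S (S n))).
  { intros t x ht. specialize (HC t x ht).
    pose proof (Rle_abs (u t x - w t x)).
    pose proof (abs_pow_le k (S (S n)) x ltac:(unfold n; lia)).
    unfold n in H1; rewrite <- pow_p_abs in H1. fold n in H1.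
    pose proof (pow_even_nonneg (S k) x). replace (2 * S k)%nat with (S (S n)) in * by (unfold n; lia).
    assert (C * (1 + Rabs x ^ k) <= C * (2 + x ^ S (S n))) by (apply Rmult_le_compat_l; lra).
    assert (0 <= C * x ^ S (S n)) by (apply Rmult_le_pos; lra).
    lra. }
  assert (F2 : forall x, Phi T' x < 0).
  { intro x. unfold Phi.
    pose proof (Gr T' x ltac:(lra)).
    assert (hx : 0 <= x ^ S (S n)).
    { pose proof (pow_even_nonneg (S k) x). replace (2 * S k)%nat with (S (S n)) in * by (unfold n; lia). lra. }
    assert (E1 : exp (lam * T') = exp (lam * t1) * exp (lam * (T' - t1))) by (rewrite <- exp_plus; f_equal; ring).
    assert (E2 : 1 + A <= exp (lam * (T' - t1))).
    { apply Rle_trans with (1 + lam * (T' - t1)); [|apply exp_ineq1_le].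
      assert (A <= lam * (T' - t1)); [|lra].
      assert (A / (T' - t1) * (T' - t1) = A) by (field; lra).
      assert (lam * (T' - t1) = (K * P2 + 1) * (T' - t1) + A / (T' - t1) * (T' - t1)) by (unfold lam; ring).
      assert (0 <= (K * P2 + 1) * (T' - t1)) by (apply Rmult_le_pos; nra).
      lra. }
    assert (E3 : eps * ps T' x = eta * exp (lam * (T' - t1)) / (2 * X1) * (1 + x ^ S (S n))).
    { unfold eps, ps, psi. fold X1. rewrite E1. field. split; [lra|apply Rgt_not_eq, exp_pos]. }
    assert (E4 : eta * (1 + A) / (2 * X1) = eta / (2 * X1) + 2 * C).
    { unfold A. field. split; lra. }
    assert (E5 : eta * (1 + A) / (2 * X1) <= eta * exp (lam * (T' - t1)) / (2 * X1)).
    { unfold Rdiv. apply Rmult_le_compat_r. apply Rlt_le, Rinv_0_lt_compat; lra. apply Rmult_le_compat_l; lra. }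
    assert (0 < eta / (2 * X1)) by (apply Rdiv_lt_0_compat; lra).
    assert (2 * C * (1 + x ^ S (S n)) < eta * exp (lam * (T' - t1)) / (2 * X1) * (1 + x ^ S (S n))).
    { apply Rmult_lt_compat_r; lra. }
    lra. }
  set (RR := 1 + 4 * C / eps).
  assert (F3 : forall t x, 0 <= t <= T' -> RR <= Rabs x -> Phi t x < 0).
  { intros t x ht hx. unfold Phi.
    pose proof (big_x C eps k x hC heps hx) as BX. fold n in BX.
    specialize (HC t x ht). pose proof (Rle_abs (u t x - w t x)).
    assert (eps * (1 + x ^ S (S n)) <= eps * ps t x).
    { unfold ps, psi. apply Rmult_le_compat_l; [lra|].
      assert (1 <= exp (lam * t)).
      { apply Rle_trans with (1 + lam * t); [|apply exp_ineq1_le].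
        assert (0 <= lam * t) by (apply Rmult_le_pos; nra). lra. }
      pose proof (pow_even_nonneg (S k) x). replace (2 * S k)%nat with (S (S n)) in * by (unfold n; lia).
      nra. }
    lra. }
  assert (hR : 1 <= RR).
  { unfold RR. assert (0 <= 4 * C / eps) by (apply Rmult_le_pos; [lra|apply Rlt_le, Rinv_0_lt_compat; lra]). lra. }
  destruct (max2 Phi 0 T' (- RR) RR ltac:(lra) ltac:(lra)) as [t0 [x0 [Ht0 [Hx0 Hmax]]]].
  { intros t x Ht Hx e0 He0.
    destruct (half_eps u t x Cu (proj1 Ht) (e0 / 3) ltac:(lra)) as [d1 [Hd1 D1]].
    destruct Cw as [_ [_ [_ [Cw4 _]]]].
    destruct (cont2_eps w t x (Cw4 (t, x)) (e0 / 3) ltac:(lra)) as [d2 [Hd2 D2]].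
    destruct (psi_C12 lam n) as [_ [_ [_ [Cp4 _]]]].
    destruct (cont2_eps (psi lam n) t x (Cp4 (t, x)) (e0 / 3 / eps) ltac:(apply Rdiv_lt_0_compat; lra)) as [d3 [Hd3 D3]].
    exists (Rmin d1 (Rmin d2 d3)). split.
    { apply Rmin_pos; auto. apply Rmin_pos; auto. }
    intros s y Hs Hy Hst Hyx.
    assert (Hm1 := Rmin_l d1 (Rmin d2 d3)). assert (Hm2 := Rmin_r d1 (Rmin d2 d3)).
    assert (Hm3 := Rmin_l d2 d3). assert (Hm4 := Rmin_r d2 d3).
    specialize (D1 s y (proj1 Hs) ltac:(lra) ltac:(lra)).
    specialize (D2 s y ltac:(lra) ltac:(lra)).
    specialize (D3 s y ltac:(lra) ltac:(lra)).
    apply Rabs_def2 in D1. apply Rabs_def2 in D2. apply Rabs_def2 in D3.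
    destruct D1, D2, D3.
    unfold Phi, ps.
    assert (eps * (psi lam n s y - psi lam n t x) > - (e0 / 3)).
    { replace (- (e0/3)) with (eps * (- (e0 / 3 / eps))) by (field; lra).
      apply Rmult_gt_compat_l; lra. }
    lra. }
  assert (Hx1 : - RR <= x1 <= RR).
  { destruct (Rle_dec RR (Rabs x1)) as [h|h].
    - exfalso. pose proof (F3 t1 x1 ltac:(lra) h). lra.
    - apply Rnot_le_lt in h. apply Rabs_def2 in h. lra. }
  set (M := Phi t0 x0).
  assert (HM : eta / 2 <= M) by (rewrite <- F1; apply Hmax; lra).
  assert (Ht0' : 0 < t0 < T').
  { split.
    - destruct (Rle_lt_or_eq_dec _ _ (proj1 Ht0)) as [h|h]; auto.
      exfalso. unfold M in HM. rewrite <- h in HM. specialize (F0 x0). lra.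
    - destruct (Rle_lt_or_eq_dec _ _ (proj2 Ht0)) as [h|h]; auto.
      exfalso. unfold M in HM. rewrite h in HM. specialize (F2 x0). lra. }
  assert (Hglob : forall t x, 0 <= t <= T' -> Phi t x <= M).
  { intros t x ht. destruct (Rle_dec RR (Rabs x)) as [h|h].
    - pose proof (F3 t x ht h). lra.
    - apply Rnot_le_lt in h. apply Rabs_def2 in h. apply Hmax; lra. }
  pose proof (C12_lin _ _ _ _ _ _ _ _ 1 eps M Cw (psi_C12 lam n)) as Cphi.
  specialize (Hsub t0 x0 _ _ _ _ (proj1 Ht0') Cphi).
  assert (Hval : 1 * w t0 x0 + eps * psi lam n t0 x0 + M = u t0 x0).
  { unfold M, Phi, ps. ring. }
  specialize (Hsub Hval).
  assert (Htouch : exists d : R, 0 < d /\ forall s y, 0 < s -> Rabs (s - t0) < d ->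
        Rabs (y - x0) < d -> u s y <= 1 * w s y + eps * psi lam n s y + M).
  { exists (Rmin t0 (T' - t0)). split. apply Rmin_pos; lra.
    intros s y hs hst _. pose proof (Rmin_r t0 (T' - t0)). apply Rabs_def2 in hst. destruct hst.
    pose proof (Hglob s y ltac:(lra)) as HG. unfold Phi, ps in HG. lra. }
  specialize (Hsub Htouch). cbv beta in Hsub.
  rewrite Rmult_1_l, Rmult_1_l in Hsub.
  rewrite Pw in Hsub by exact Ht0'.
  set (pxx := exp (lam * t0) * (INR (S (S n)) * INR (S n) * x0 ^ n)) in Hsub.
  assert (Hpxx : 0 <= pxx).
  { unfold pxx. apply Rmult_le_pos. apply Rlt_le, exp_pos. apply Rmult_le_pos. fold P2; lra.
    unfold n; apply pow_even_nonneg. }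
  assert (Hpxx2 : pxx <= P2 * ps t0 x0).
  { unfold pxx, ps, psi, P2. pose proof (pow_even_le k x0) as PE. fold n in PE.
    pose proof (exp_pos (lam * t0)).
    assert (INR (S (S n)) * INR (S n) * x0 ^ n <= INR (S (S n)) * INR (S n) * (1 + x0 ^ S (S n))).
    { apply Rmult_le_compat_l. fold P2; lra. exact PE. }
    nra. }
  pose proof (G_lip sl su (wxx t0 x0) (eps * pxx) ltac:(apply Rmult_le_pos; lra)) as GL.
  fold K in GL.
  specialize (hps t0 x0).
  assert (K * (eps * pxx) <= K * P2 * (eps * ps t0 x0)).
  { replace (K * P2 * (eps * ps t0 x0)) with (K * (eps * (P2 * ps t0 x0))) by ring.
    apply Rmult_le_compat_l; auto. apply Rmult_le_compat_l; lra. }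
  assert (0 < eps * ps t0 x0) by (apply Rmult_lt_0_compat; lra).
  assert ((K * P2 + 1) * (eps * ps t0 x0) <= lam * (eps * ps t0 x0)) by (apply Rmult_le_compat_r; lra).
  unfold ps in *.
  nra.
Qed.


Lemma sub_of_super sl su u : visc_super (Gfun sl su) u -> visc_sub (Gfun su sl) (fun t x => - u t x).
Proof.
  intros Sup t x phi phit phix phixx ht Cphi Heq [d [Hd Ht]].
  pose proof (C12_lin _ _ _ _ _ _ _ _ (-1) 0 0 Cphi Cphi) as C2.
  specialize (Sup t x _ _ _ _ ht C2).
  assert (E : -1 * phi t x + 0 * phi t x + 0 = u t x) by (rewrite Heq; ring).
  specialize (Sup E).
  assert (T : exists d : R, 0 < d /\ forall s y, 0 < s -> Rabs (s - t) < d ->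
        Rabs (y - x) < d -> -1 * phi s y + 0 * phi s y + 0 <= u s y).
  { exists d; split; auto. intros s y hs h1 h2. specialize (Ht s y hs h1 h2). lra. }
  specialize (Sup T). cbv beta in Sup.
  replace (-1 * phixx t x + 0 * phixx t x) with (- phixx t x) in Sup by ring.
  rewrite <- G_neg. lra.
Qed.

Lemma half_opp u : cont_on_half u -> cont_on_half (fun t x => - u t x).
Proof.
  intros Hu t x ht.
  apply (filterlim_comp _ _ _ (fun p : R * R => u (fst p) (snd p)) Ropp _ (locally (u t x))).
  apply Hu; auto.
  apply (continuous_opp (fun y : R => y)). apply continuous_id.
Qed.

Lemma C_nonneg (C : R) k (v : R) : Rabs v <= C * (1 + Rabs 0 ^ k) -> 0 <= C.
Proof.
  intro h. pose proof (Rabs_pos v). assert (0 <= Rabs 0 ^ k) by (apply pow_le, Rabs_pos). nra.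
Qed.

Lemma growth_combine (f g : R -> R -> R) T :
  (exists C k, forall t x, 0 <= t <= T -> Rabs (f t x) <= C * (1 + Rabs x ^ k)) ->
  (exists C k, forall t x, 0 <= t <= T -> Rabs (g t x) <= C * (1 + Rabs x ^ k)) ->
  0 <= T ->
  exists C k, forall t x, 0 <= t <= T -> Rabs (f t x - g t x) <= C * (1 + Rabs x ^ k).
Proof.
  intros [C1 [k1 H1]] [C2 [k2 H2]] hT.
  pose proof (C_nonneg _ _ _ (H1 0 0 ltac:(lra))) as c1.
  pose proof (C_nonneg _ _ _ (H2 0 0 ltac:(lra))) as c2.
  exists (2 * (C1 + C2)), (k1 + k2)%nat. intros t x ht.
  specialize (H1 t x ht). specialize (H2 t x ht).
  pose proof (abs_pow_le k1 (k1 + k2) x ltac:(lia)).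
  pose proof (abs_pow_le k2 (k1 + k2) x ltac:(lia)).
  assert (0 <= Rabs x ^ (k1 + k2)) by (apply pow_le, Rabs_pos).
  assert (C1 * (1 + Rabs x ^ k1) <= C1 * (2 + Rabs x ^ (k1 + k2))) by (apply Rmult_le_compat_l; lra).
  assert (C2 * (1 + Rabs x ^ k2) <= C2 * (2 + Rabs x ^ (k1 + k2))) by (apply Rmult_le_compat_l; lra).
  unfold Rminus. eapply Rle_trans. apply Rabs_triang. rewrite Rabs_Ropp.
  assert (0 <= (C1 + C2) * Rabs x ^ (k1 + k2)) by (apply Rmult_le_pos; lra).
  nra.
Qed.


Theorem corollary5p2 (sl su rho : R) (H : R -> R)
  (hsl : 0 <= sl) (hslu : sl <= su) (hrho : 0 < rho)
  (hd1 : forall x, ex_derive H x)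
  (hd2 : forall x, ex_derive (Derive H) x)
  (hc2 : forall x, continuous (Derive_n H 2) x)
  (hgrowth : poly_growth H)
  (hode : forall x, x / 2 * Derive H x - Gfun sl su (Derive_n H 2 x) = rho * H x) :
  NG_value (Gfun sl su) H 0.
Proof.
  intros u [Cu [Gu [I0 [Sub Sup]]]].
  assert (hc2' : forall x, continuous (Derive (Derive H)) x) by exact hc2.
  assert (Key : forall t1, 0 <= t1 < 1 -> u t1 0 = exp (rho * ln (1 - t1)) * H 0).
  { intros t1 ht1.
    set (a := (1 + t1) / 2).
    assert (ha : a < 1) by (unfold a; lra).
    assert (ha0 : 0 < a) by (unfold a; lra).
    assert (ht1a : t1 < a) by (unfold a; lra).
    pose proof (W_C12 rho a H ha hd1 hd2 hc2') as CW.
    assert (GR : exists C k, forall t x, 0 <= t <= a -> Rabs (u t x - Wf rho a H t x) <= C * (1 + Rabs x ^ k)).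
    { apply growth_combine; [|apply W_growth; auto; lra|lra].
      destruct (Gu a) as [C [k HC]]. exists C, k. exact HC. }
    assert (Up : u t1 0 <= Wf rho a H t1 0).
    { apply (comparison sl su u (Wf rho a H) (Wt rho a H) (Wx rho a H) (Wxx rho a H) a); auto.
      - intros t x ht. apply W_pde; auto; lra.
      - intros x. rewrite I0, W_zero; lra.
      - lra. }
    assert (Lo : - u t1 0 <= -1 * Wf rho a H t1 0 + 0 * Wf rho a H t1 0 + 0).
    { apply (comparison su sl (fun t x => - u t x)
        (fun t x => -1 * Wf rho a H t x + 0 * Wf rho a H t x + 0)
        (fun t x => -1 * Wt rho a H t x + 0 * Wt rho a H t x)
        (fun t x => -1 * Wx rho a H t x + 0 * Wx rho a H t x)
        (fun t x => -1 * Wxx rho a H t x + 0 * Wxx rho a H t x) a); auto.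
      - apply C12_lin; auto.
      - intros t x ht. cbv beta. rewrite W_pde with (sl := sl) (su := su) by (auto; lra).
        replace (-1 * Wxx rho a H t x + 0 * Wxx rho a H t x) with (- Wxx rho a H t x) by ring.
        rewrite <- (G_neg sl su), Ropp_involutive. ring.
      - apply half_opp; auto.
      - destruct GR as [C [k HC]]. exists C, k. intros t x ht.
        replace (- u t x - (-1 * Wf rho a H t x + 0 * Wf rho a H t x + 0)) with (- (u t x - Wf rho a H t x)) by ring.
        rewrite Rabs_Ropp. auto.
      - intros x. rewrite I0, W_zero by lra. lra.
      - apply sub_of_super; auto.
      - lra. }
    rewrite W_x0 in Up, Lo by lra. lra. }
  apply Rabs_eq_0.
  apply Rle_antisym; [|apply Rabs_pos].
  apply Rnot_lt_le. intro Hpos.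
  set (eps := Rabs (u 1 0) / 2).
  assert (heps : 0 < eps) by (unfold eps; lra).
  destruct (half_eps u 1 0 Cu ltac:(lra) eps heps) as [del [Hdel D]].
  set (B := eps / (Rabs (H 0) + 1)).
  assert (hB : 0 < B) by (unfold B; apply Rdiv_lt_0_compat; [lra|pose proof (Rabs_pos (H 0)); lra]).
  set (h := Rmin (Rmin (del / 2) (1 / 2)) (exp (ln B / rho))).
  assert (hh0 : 0 < h).
  { unfold h. apply Rmin_pos; [apply Rmin_pos; lra|apply exp_pos]. }
  assert (hh1 : h <= del / 2 /\ h <= 1 / 2).
  { unfold h. pose proof (Rmin_l (Rmin (del / 2) (1 / 2)) (exp (ln B / rho))).
    pose proof (Rmin_l (del / 2) (1 / 2)). pose proof (Rmin_r (del / 2) (1 / 2)). lra. }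
  assert (hh2 : h <= exp (ln B / rho)) by apply Rmin_r.
  assert (Hk : u (1 - h) 0 = exp (rho * ln h) * H 0).
  { rewrite Key by lra. replace (1 - (1 - h)) with h by ring. reflexivity. }
  specialize (D (1 - h) 0 ltac:(lra)).
  assert (E1 : exp (rho * ln h) <= B).
  { assert (ln h <= ln B / rho).
    { rewrite <- (ln_exp (ln B / rho)). apply ln_le; auto. }
    apply Rle_trans with (exp (ln B)); [|rewrite exp_ln; auto; lra].
    apply exp_mono.
    assert (RL : rho * ln h <= rho * (ln B / rho)) by (apply Rmult_le_compat_l; lra).
    replace (rho * (ln B / rho)) with (ln B) in RL by (field; lra). lra. }
  assert (E2 : Rabs (u (1 - h) 0) < eps).
  { rewrite Hk, Rabs_mult, (Rabs_right (exp _)) by (apply Rle_ge, Rlt_le, exp_pos).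
    pose proof (Rabs_pos (H 0)). pose proof (exp_pos (rho * ln h)).
    apply Rle_lt_trans with (B * Rabs (H 0)). apply Rmult_le_compat_r; lra.
    unfold B. apply Rlt_le_trans with (eps / (Rabs (H 0) + 1) * (Rabs (H 0) + 1)).
    apply Rmult_lt_compat_l; [exact hB|lra]. right; field; lra. }
  assert (E3 : Rabs (u (1 - h) 0 - u 1 0) < eps).
  { apply D. replace (1 - h - 1) with (- h) by ring. rewrite Rabs_Ropp, Rabs_right; lra.
    replace (0 - 0) with 0 by ring. rewrite Rabs_R0. lra. }
  pose proof (Rabs_triang_inv (u 1 0) (u (1 - h) 0)).
  rewrite <- Rabs_Ropp in E3. replace (- (u (1 - h) 0 - u 1 0)) with (u 1 0 - u (1 - h) 0) in E3 by ring.
  unfold eps in *. lra.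
Qed.
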